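(* The function $g\mapsto \|g\|_2^2$ from $\mathbb{F}_\infty$ to $\mathbb{N}$ is a morphism on an arbitrary large subset of $\mathbb{F}_\infty$: for every $N, M\in\mathbb{N}$ and every $s_1,\dots,s_M\in\mathbb{N}$ there exist elements $g_{n,k}\in\mathbb{F}_\infty$ ($1\le n\le N$, $1\le k\le M$) such that $\|g_{n,j}^{-1}g_{m,k}\|_2^2 = s_j+s_k$ for all $j,k$ and all $n\ne m$.
   Context: $\mathbb{N}=\{0,1,2,\dots\}$. $\mathbb{F}_\infty$ is the free group on countably infinitely many free generators. Every $g\ne e$ in $\mathbb{F}_\infty$ has a unique reduced form $g = a_1^{k_1}a_2^{k_2}\cdots a_n^{k_n}$ with $a_j$ free generators, $a_j\neq a_{j+1}$, and $k_j\in\mathbb{Z}\setminus\{0\}$; for $0<p\le 2$ the $\ell^p$ length is $\|g\|_p = (\sum_{j=1}^n |k_j|^p)^{1/p}$, and $\|e\|_p=0$. *)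

(* Defs.v *)
(* The free group F_oo on countably many generators a_0, a_1, ...
   is modelled by its reduced words: a word is a list of syllables (i, k)
   standing for a_i^k, with k <> 0 and consecutive generators distinct. *)
From mathcomp Require Import all_boot all_order all_algebra.
Set Implicit Arguments. Unset Strict Implicit. Unset Printing Implicit Defensive.
Import Order.TTheory GRing.Theory Num.Theory.

Definition syllable := (nat * int)%type.

Fixpoint adj_distinct (w : seq syllable) : bool :=
  match w with
  | a :: ((b :: _) as w') => (a.1 != b.1) && adj_distinct w'
  | _ => true
  end.

Definition reduced (w : seq syllable) : bool :=
  all (fun a => a.2 != 0%R) w && adj_distinct w.

Definition Finf := {w : seq syllable | reduced w}.

Definition cons_red (a : syllable) (w : seq syllable) : seq syllable :=
  if a.2 == 0%R then w else
  match w with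
  | b :: w' => if a.1 == b.1 then
                 (if (a.2 + b.2 == 0)%R then w' else (a.1, (a.2 + b.2)%R) :: w')
               else a :: w
  | [::] => [:: a]
  end.

Definition wmul (u v : seq syllable) : seq syllable := foldr cons_red v u.
Definition winv (u : seq syllable) : seq syllable :=
  rev (map (fun a => (a.1, (- a.2)%R)) u).

Definition ldiv (g h : Finf) : seq syllable := wmul (winv (val g)) (val h).

Definition l2sq (w : seq syllable) : nat := \sum_(a <- w) (absz a.2) ^ 2.

(* Main.v *)
Require Import Defs.
From mathcomp Require Import all_boot all_order all_algebra.
From mathcomp Require Import zify.
Set Implicit Arguments. Unset Strict Implicit. Unset Printing Implicit Defensive.
Import Order.TTheory GRing.Theory Num.Theory.

Lemma uniq_adj (w : seq syllable) : uniq (map fst w) -> adj_distinct w.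
Proof.
elim: w => [|a w IH] //= /andP [Ha Hu].
case: w IH Ha Hu => [|b w] IH Ha Hu //.
have H2 := IH Hu; change ((a.1 != b.1) && adj_distinct (b :: w)); rewrite H2 andbT; apply/eqP => E; move: Ha; rewrite inE E eqxx //.
Qed.

Lemma wmul_cat (u v : seq syllable) :
  all (fun a => a.2 != 0%R) u -> uniq (map fst (u ++ v)) -> wmul u v = u ++ v.
Proof.
elim: u => [|a u IH] //= /andP [Ha Hall] /andP [Hn Hu].
rewrite IH // /cons_red (negbTE Ha).
case E: (u ++ v) => [|b w] //.
have -> : (a.1 == b.1) = false.
  apply/negbTE; apply: contra Hn => /eqP ->; rewrite E /= inE eqxx //.
by [].
Qed.

Definition wd (N n s : nat) : seq syllable :=
  map (fun i => (i * N + n, (1:int))) (iota 0 s).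

Lemma wd_fst N n s : map fst (wd N n s) = map (fun i => i * N + n) (iota 0 s).
Proof. by rewrite /wd -map_comp. Qed.

Lemma wd_uniq N n s : n < N -> uniq (map fst (wd N n s)).
Proof.
move=> Hn; rewrite wd_fst map_inj_uniq ?iota_uniq // => i j /eqP.
rewrite eqn_add2r eqn_mul2r; case/orP => /eqP //; lia.
Qed.

Lemma wd_red N n s : n < N -> reduced (wd N n s).
Proof.
move=> Hn; rewrite /reduced uniq_adj ?wd_uniq // andbT.
by apply/allP => x /mapP [i _ ->].
Qed.

Lemma l2sq_wd N n s : l2sq (wd N n s) = s.
Proof.
rewrite /l2sq /wd big_map /=.
by rewrite (eq_bigr (fun _ => 1)) // sum1_size size_iota.
Qed.

Lemma l2sq_cat u v : l2sq (u ++ v) = l2sq u + l2sq v.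
Proof. by rewrite /l2sq big_cat. Qed.

Lemma l2sq_winv u : l2sq (winv u) = l2sq u.
Proof.
rewrite /l2sq /winv big_rev big_map; apply: eq_bigr => a _ /=.
by rewrite abszN.
Qed.

Lemma fst_winv u : map fst (winv u) = rev (map fst u).
Proof. by rewrite /winv map_rev -map_comp. Qed.

Theorem proposition4p1 (N M : nat) (s : 'I_M -> nat) :
  exists g : 'I_N -> 'I_M -> Finf,
    forall (n m : 'I_N) (j k : 'I_M), n != m ->
      l2sq (ldiv (g n j) (g m k)) = (s j + s k)%N.
Proof.
exists (fun n k => exist _ (wd N (val n) (s k)) (wd_red (s k) (ltn_ord n))).
move=> n m j k Hnm; rewrite /ldiv /=.
rewrite wmul_cat.
- by rewrite l2sq_cat l2sq_winv !l2sq_wd.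
- by apply/allP => x; rewrite /winv mem_rev => /mapP [y /mapP [i _ ->] ->].
rewrite map_cat fst_winv cat_uniq rev_uniq !wd_uniq //= andbT.
apply/hasPn => x; rewrite mem_rev !wd_fst => /mapP [i _ ->].
apply/negP => /mapP [i' _ E].
have := congr1 (modn^~ N) E; rewrite /= !modnMDl !modn_small //.
by move=> E'; move: Hnm; rewrite -(inj_eq val_inj) /= E' eqxx.
Qed.
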